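(* Let $K$ be a finite connected bipartite simple graph. Then the number of isomorphism classes of simple graphs $G$ with $KC(G)\cong K$ equals $|\Pi_K/{\cong}|$, the number of conjugacy classes of polarities of $K$ under $\operatorname{Aut}K$. In particular, $K$ is the Kronecker cover of exactly $k$ pairwise non-isomorphic simple graphs if and only if $k=|\Pi_K/{\cong}|$.
   Context: For a simple graph $G$, the Kronecker cover $KC(G)$ is the graph with vertex set $V(G)\times\{0,1\}$ in which $(u,a)$ is adjacent to $(v,b)$ if and only if $uv\in E(G)$ and $a\neq b$. Equivalently, it is the tensor product $G\times K_2$. Let $K$ be a connected bipartite graph with bipartition $(V_1,V_2)$. A polarity of $K$ is an automorphism $\pi\in\operatorname{Aut}K$ such that: - $\pi$ is a fixed-point-free involution; - $\pi(V_1)=V_2$; - for every vertex $v$, the vertices $v$ and $\pi(v)$ are non-adjacent. Let $\Pi_K\subseteq\operatorname{Aut}K$ be the set of all polarities of $K$. Define two polarities $\pi,\pi'$ to be equivalent, written $\pi\cong\pi'$, if $\pi'=\alpha\pi\alpha^{-1}$ for some $\alpha\in\operatorname{Aut}K$; this is an equivalence relation on $\Pi_K$. Then $\Pi_K/{\cong}$ denotes the set of equivalence classes. *)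

(* Defs.v *)
From mathcomp Require Import all_boot fingroup perm.
Set Implicit Arguments. Unset Strict Implicit. Unset Printing Implicit Defensive.

Definition simple_graph (T : finType) (e : rel T) : bool :=
  [forall x, ~~ e x x] && [forall x, forall y, e x y == e y x].

Definition connected_graph (T : finType) (e : rel T) : Prop :=
  forall x y, connect e x y.

Definition is_bipartition (T : finType) (e : rel T) (V1 : {set T}) : bool :=
  [forall x, forall y, e x y ==> ((x \in V1) != (y \in V1))].

Definition kron_cover (T : finType) (e : rel T) : rel (T * bool) :=
  fun u v => e u.1 v.1 && (u.2 != v.2).

Definition graph_iso (T1 T2 : finType) (e1 : rel T1) (e2 : rel T2) : bool :=
  (#|T1| == #|T2|) &&
  [exists f : {ffun T1 -> T2},
     injectiveb f && [forall x, forall y, e2 (f x) (f y) == e1 x y]].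

Definition grel (m : nat) (E : {ffun 'I_m * 'I_m -> bool}) : rel 'I_m :=
  fun x y => E (x, y).

Definition kc_preimages (T : finType) (eK : rel T) (m : nat)
  : {set {ffun 'I_m * 'I_m -> bool}} :=
  [set E | simple_graph (grel E) && graph_iso (kron_cover (grel E)) eK].

Definition n_kc_classes_m (T : finType) (eK : rel T) (m : nat) : nat :=
  #|[set [set E' : {ffun 'I_m * 'I_m -> bool} | graph_iso (grel E) (grel E')] | E in kc_preimages eK m]|.

(* Every finite graph is isomorphic to one on some 'I_m, and KC(G) ~ K forces
   2 |V(G)| = |V(K)|, so m ranges over 0..#|T| w.l.o.g.; graphs on different
   'I_m are never isomorphic, so the classes are counted per m and summed. *)
Definition n_kc_classes (T : finType) (eK : rel T) : nat :=
  \sum_(m < #|T|.+1) n_kc_classes_m eK m.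

Definition autK (T : finType) (eK : rel T) : {set {perm T}} :=
  [set s : {perm T} | [forall x, forall y, eK (s x) (s y) == eK x y]].

Definition polarity (T : finType) (eK : rel T) (V1 : {set T}) (p : {perm T})
  : bool :=
  [&& p \in autK eK,
      (p * p == 1)%g,
      [forall x, p x != x],
      [forall x, (p x \in V1) == (x \notin V1)] &
      [forall x, ~~ eK x (p x)]].

Definition polarities (T : finType) (eK : rel T) (V1 : {set T})
  : {set {perm T}} := [set p | polarity eK V1 p].

Definition polarity_class (T : finType) (eK : rel T) (p : {perm T})
  : {set {perm T}} :=
  [set (a * p * a^-1)%g | a in autK eK].

Definition n_polarity_classes (T : finType) (eK : rel T) (V1 : {set T}) : nat :=
  #|[set polarity_class eK p | p in polarities eK V1]|.

(* Main.v *)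
Require Import Defs.
From mathcomp Require Import all_boot fingroup perm.
From mathcomp Require Import zify.
Require Import Defs.
Set Implicit Arguments. Unset Strict Implicit. Unset Printing Implicit Defensive.

Lemma class_count (A B C D : finType) (d : D) (P : {set A}) (Q : {set B})
  (cA : A -> C) (cB : B -> D) (R : A -> B -> bool) :
 (forall a, a \in P -> exists2 b, b \in Q & R a b) ->
 (forall b, b \in Q -> exists2 a, a \in P & R a b) ->
 (forall a a' b b', a \in P -> a' \in P -> b \in Q -> b' \in Q ->
     R a b -> R a' b' -> (cA a == cA a') = (cB b == cB b')) ->
 #|cA @: P| = #|cB @: Q|.
Proof.
move=> tot sur comp.
pose k (x : C) : D :=
  if [pick ab : A * B | [&& ab.1 \in P, ab.2 \in Q, R ab.1 ab.2 & cA ab.1 == x]]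
  is Some ab then cB ab.2 else d.
have kP a b : a \in P -> b \in Q -> R a b -> k (cA a) = cB b.
  move=> aP bQ Rab; rewrite /k; case: pickP => [[a' b'] /= /and4P [a'P b'Q Rab' /eqP e]|].
    by apply/eqP; rewrite -(comp a' a) // e.
  by move/(_ (a, b)); rewrite /= aP bQ Rab eqxx.
have -> : cB @: Q = k @: (cA @: P).
  apply/setP => y; apply/imsetP/imsetP => [[b bQ ->]|[x /imsetP [a aP ->] ->]].
    have [a aP Rab] := sur b bQ; exists (cA a); first exact: imset_f.
    by rewrite (kP a b).
  have [b bQ Rab] := tot a aP; exists b => //; exact: kP.
rewrite [RHS]card_in_imset // => x1 x2 /imsetP [a1 a1P ->] /imsetP [a2 a2P ->].
have [b1 b1Q R1] := tot a1 a1P; have [b2 b2Q R2] := tot a2 a2P.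
rewrite (kP a1 b1) // (kP a2 b2) // => e; apply/eqP; rewrite (comp a1 a2 b1 b2) //.
by rewrite e.
Qed.

Lemma eqclass (X : finType) (r : rel X) :
  (forall x, r x x) -> (forall x y, r x y -> r y x) ->
  (forall x y z, r x y -> r y z -> r x z) ->
  forall x x', ([set y | r x y] == [set y | r x' y]) = r x x'.
Proof.
move=> rf sy tr x x'; apply/eqP/idP => [e|rxx'].
  have : x' \in [set y | r x' y] by rewrite inE.
  by rewrite -e inE.
apply/setP => y; rewrite !inE; apply/idP/idP => H.
  exact: tr (sy _ _ rxx') H.
exact: tr rxx' H.
Qed.

Lemma giso_refl (X : finType) (e : rel X) : graph_iso e e.
Proof.
apply/andP; split => //; apply/existsP; exists [ffun x => x].
apply/andP; split; first by apply/injectiveP => x y; rewrite !ffunE.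
by apply/forallP => x; apply/forallP => y; rewrite !ffunE.
Qed.

Lemma giso_sym (X : finType) (e1 e2 : rel X) : graph_iso e1 e2 -> graph_iso e2 e1.
Proof.
case/andP => _ /existsP [f /andP [/injectiveP fi /forallP H]].
apply/andP; split => //; apply/existsP; exists [ffun x => invF fi x].
apply/andP; split.
  apply/injectiveP => x y; rewrite !ffunE => h.
  by rewrite -(f_invF fi x) -(f_invF fi y) h.
apply/forallP => x; apply/forallP => y; rewrite !ffunE.
by have /eqP <- := forallP (H (invF fi x)) (invF fi y); rewrite !f_invF.
Qed.

Lemma giso_trans (X : finType) (e1 e2 e3 : rel X) :
  graph_iso e1 e2 -> graph_iso e2 e3 -> graph_iso e1 e3.
Proof.
case/andP => _ /existsP [f /andP [/injectiveP fi /forallP H]].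
case/andP => _ /existsP [g /andP [/injectiveP gi /forallP G]].
apply/andP; split => //; apply/existsP; exists [ffun x => g (f x)].
apply/andP; split.
  by apply/injectiveP => x y; rewrite !ffunE => /gi /fi.
apply/forallP => x; apply/forallP => y; rewrite !ffunE.
by rewrite (eqP (forallP (G (f x)) (f y))) (eqP (forallP (H x) y)).
Qed.

Lemma autK1 (T : finType) (eK : rel T) : (1%g : {perm T}) \in autK eK.
Proof. by rewrite inE; apply/forallP => x; apply/forallP => y; rewrite !perm1. Qed.

Lemma autKM (T : finType) (eK : rel T) (a b : {perm T}) :
  a \in autK eK -> b \in autK eK -> (a * b)%g \in autK eK.
Proof.
rewrite !inE => /forallP A /forallP B; apply/forallP => x; apply/forallP => y.
by rewrite !permM (eqP (forallP (B (a x)) (a y))) (eqP (forallP (A x) y)).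
Qed.

Lemma autKV (T : finType) (eK : rel T) (a : {perm T}) :
  a \in autK eK -> (a^-1)%g \in autK eK.
Proof.
rewrite !inE => /forallP A; apply/forallP => x; apply/forallP => y.
by rewrite -(eqP (forallP (A (a^-1 x)%g) (a^-1 y)%g)) !permKV.
Qed.

Definition conjrel (T : finType) (eK : rel T) (p q : {perm T}) : bool :=
  [exists a in autK eK, q == (a * p * a^-1)%g].

Lemma pclassE (T : finType) (eK : rel T) (p : {perm T}) :
  polarity_class eK p = [set q | conjrel eK p q].
Proof.
apply/setP => q; rewrite inE; apply/imsetP/existsP => [[a aK ->]|[a /andP [aK /eqP ->]]].
  by exists a; rewrite aK eqxx.
by exists a.
Qed.

Lemma pclass_eq (T : finType) (eK : rel T) (p q : {perm T}) :
  (polarity_class eK p == polarity_class eK q) = conjrel eK p q.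
Proof.
rewrite !pclassE; apply: eqclass.
- by move=> x; apply/existsP; exists 1%g; rewrite autK1 invg1 mulg1 mul1g eqxx.
- move=> x y /existsP [a /andP [aK /eqP ->]]; apply/existsP; exists (a^-1)%g.
  rewrite autKV //= invgK !mulgA mulVg mul1g; by rewrite mulgKV eqxx.
- move=> x y z /existsP [a /andP [aK /eqP ->]] /existsP [b /andP [bK /eqP ->]].
  apply/existsP; exists (b * a)%g; rewrite autKM //= invMg.
  by rewrite !mulgA eqxx.
Qed.

Definition sw (m : nat) (u : 'I_m * bool) : 'I_m * bool := (u.1, ~~ u.2).

Lemma swK m : involutive (@sw m). Proof. by case=> i b; rewrite /sw negbK. Qed.
Lemma sw_inj m : injective (@sw m). Proof. exact: inv_inj (@swK m). Qed.
Lemma sw_neq m (u : 'I_m * bool) : sw u != u.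
Proof. by case: u => i b; rewrite /sw xpair_eqE eqxx /=; case: b. Qed.

Lemma kc_sw m (E : {ffun 'I_m * 'I_m -> bool}) u v :
  kron_cover (grel E) (sw u) (sw v) = kron_cover (grel E) u v.
Proof. by rewrite /kron_cover /sw /=; case: u.2; case: v.2. Qed.

Definition Rrel (T : finType) (eK : rel T) (m : nat)
  (E : {ffun 'I_m * 'I_m -> bool}) (p : {perm T}) : bool :=
  [exists phi : {ffun 'I_m * bool -> T},
    [&& injectiveb phi,
        [forall u, forall v, eK (phi u) (phi v) == kron_cover (grel E) u v] &
        [forall u, p (phi u) == phi (sw u)]]].

Lemma tot (T : finType) (eK : rel T) (V1 : {set T}) m E :
  connected_graph eK -> is_bipartition eK V1 ->
  E \in kc_preimages eK m -> exists2 p, p \in polarities eK V1 & Rrel eK E p.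
Proof.
move=> conn bip; rewrite inE => /andP [/andP [/forallP irr _]].
case/andP => /eqP card /existsP [f /andP [/injectiveP fi /forallP H]].
have He u v : eK (f u) (f v) = kron_cover (grel E) u v by apply/eqP/(forallP (H u)).
have [g fg gf] := inj_card_bij fi (eq_leq (esym card)).
have qi : injective (fun x => f (sw (g x))).
  by move=> x y /fi /sw_inj /(can_inj gf).
pose p := perm qi.
have pf u : p (f u) = f (sw u) by rewrite permE fg.
have pg x : p x = f (sw (g x)) by rewrite permE.
exists p; last first.
  apply/existsP; exists f; rewrite (introT (injectiveP _) fi) /=.
  apply/andP; split; first by apply/forallP => u; apply/forallP => v; rewrite He.
  by apply/forallP => u; rewrite pf.
rewrite inE /polarity; apply/and5P; split.
- rewrite inE; apply/forallP => x; apply/forallP => y.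
  by rewrite -(gf x) -(gf y) !pf !He kc_sw.
- apply/eqP/permP => x; rewrite permM perm1 -(gf x) !pf swK //.
- apply/forallP => x; rewrite -(gf x) pf; apply/negP => /eqP /fi /eqP.
  by rewrite (negbTE (sw_neq _)).
- apply/forallP => x.
  pose a := [pred y | (y \in V1) (+) (g y).2].
  have cl : closed eK a.
    move=> y z eyz; rewrite !inE.
    have b1 := implyP (forallP (forallP bip y) z) eyz.
    have b2 : (g y).2 != (g z).2.
      by move: eyz; rewrite -{1}(gf y) -{1}(gf z) He => /andP [].
    move: b1 b2; by case: (y \in V1); case: (z \in V1); case: (g y).2; case: (g z).2.
  have := closed_connect cl (conn x (p x)); rewrite !inE pg fg /sw /=.
  by case: (x \in V1); case: (f _ \in V1); case: (g x).2.
- apply/forallP => x; rewrite -(gf x) pf He /kron_cover /sw /= /grel.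
  by have := irr (g x).1; rewrite /grel => /negbTE ->.
Qed.

Lemma pol_card (T : finType) (eK : rel T) (V1 : {set T}) p :
  p \in polarities eK V1 -> #|V1| + #|V1| = #|T|.
Proof.
rewrite inE => /and5P [_ _ _ /forallP psw _].
have l1 : #|V1| <= #|~: V1|.
  rewrite -(card_imset V1 (@perm_inj _ p)); apply: subset_leq_card.
  apply/subsetP => y /imsetP [x xV ->]; rewrite inE.
  by rewrite (eqP (psw x)) xV.
have l2 : #|~: V1| <= #|V1|.
  rewrite -(card_imset (~: V1) (@perm_inj _ p)); apply: subset_leq_card.
  apply/subsetP => y /imsetP [x]; rewrite inE => xV ->.
  by rewrite (eqP (psw x)).
have := cardsC V1; lia.
Qed.

Lemma sur (T : finType) (eK : rel T) (V1 : {set T}) m p :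
  simple_graph eK -> is_bipartition eK V1 -> #|T| = m + m ->
  p \in polarities eK V1 -> exists2 E, E \in kc_preimages eK m & Rrel eK E p.
Proof.
move=> /andP [_ /forallP sym] bip hT pP.
have hV : #|V1| = m by have := pol_card pP; lia.
move: pP; rewrite inE => /and5P [pA /eqP pp _ /forallP psw /forallP pna].
have ppx x : p (p x) = x by rewrite -permM pp perm1.
have pe x y : eK (p x) (p y) = eK x y.
  by move: pA; rewrite inE => /forallP /(_ x) /forallP /(_ y) /eqP.
have bipP x y : eK x y -> (x \in V1) != (y \in V1).
  by move=> e; exact: implyP (forallP (forallP bip x) y) e.
pose psi (i : 'I_m) : T := enum_val (cast_ord (esym hV) i).
have psiV i : psi i \in V1 by exact: enum_valP.
have psi_inj : injective psi by move=> i j /enum_val_inj /cast_ord_inj.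
have pV x : (p x \in V1) = (x \notin V1) by apply/eqP.
pose E := [ffun ij : 'I_m * 'I_m => eK (psi ij.1) (p (psi ij.2))].
pose phi := [ffun u : 'I_m * bool => if u.2 then p (psi u.1) else psi u.1].
have esym x y : eK x y = eK y x by apply/eqP; exact: (forallP (sym x) y).
exists E.
  rewrite inE; apply/andP; split.
    apply/andP; split; apply/forallP => i; rewrite /grel ?ffunE /=.
      exact: pna.
    apply/forallP => j; rewrite !ffunE /=.
    by rewrite -[X in _ == X]pe ppx esym.
  apply/andP; split; first by rewrite card_prod card_ord card_bool hT; apply/eqP; lia.
  apply/existsP; exists phi; apply/andP; split.
    apply/injectiveP => [[i a] [j b]]; rewrite !ffunE /=.
    case: a; case: b => /=.
    - by move/perm_inj/psi_inj ->.
    - by move=> e; have := psiV j; rewrite -e pV psiV.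
    - by move=> e; have := psiV i; rewrite e pV psiV.
    - by move/psi_inj ->.
  apply/forallP => [[i a]]; apply/forallP => [[j b]].
  rewrite !ffunE /kron_cover /grel /= ffunE /=.
  case: a; case: b => /=.
  - rewrite andbF; apply/eqP/negbTE/negP => /bipP; by rewrite !pV !psiV.
  - by rewrite andbT -[X in _ == X]pe ppx.
  - by rewrite andbT.
  - rewrite andbF; apply/eqP/negbTE/negP => /bipP; by rewrite !psiV.
apply/existsP; exists phi; apply/and3P; split.
- apply/injectiveP => [[i a] [j b]]; rewrite !ffunE /=.
  case: a; case: b => /=.
  + by move/perm_inj/psi_inj ->.
  + by move=> e; have := psiV j; rewrite -e pV psiV.
  + by move=> e; have := psiV i; rewrite e pV psiV.
  + by move/psi_inj ->.
- apply/forallP => [[i a]]; apply/forallP => [[j b]].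
  rewrite !ffunE /kron_cover /grel /= ffunE /=.
  case: a; case: b => /=.
  + rewrite andbF; apply/eqP/negbTE/negP => /bipP; by rewrite !pV !psiV.
  + by rewrite andbT -[X in _ == X]pe ppx.
  + by rewrite andbT.
  + rewrite andbF; apply/eqP/negbTE/negP => /bipP; by rewrite !psiV.
- by apply/forallP => [[i a]]; rewrite !ffunE /sw /=; case: a => //=; rewrite ppx.
Qed.

Lemma compat (T : finType) (eK : rel T) m E E' (p p' : {perm T}) :
  E \in kc_preimages eK m -> E' \in kc_preimages eK m ->
  Rrel eK E p -> Rrel eK E' p' ->
  graph_iso (grel E) (grel E') = conjrel eK p p'.
Proof.
rewrite inE => /andP [_ /andP [/eqP card _]] _.
case/existsP => phi /and3P [/injectiveP phii /forallP He0 /forallP Hp0].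
case/existsP => phi' /and3P [/injectiveP phii' /forallP He0' /forallP Hp0'].
have He u v : eK (phi u) (phi v) = kron_cover (grel E) u v by apply/eqP/(forallP (He0 u)).
have He' u v : eK (phi' u) (phi' v) = kron_cover (grel E') u v by apply/eqP/(forallP (He0' u)).
have Hp u : p (phi u) = phi (sw u) by apply/eqP.
have Hp' u : p' (phi' u) = phi' (sw u) by apply/eqP.
have [g fg gf] := inj_card_bij phii (eq_leq (esym card)).
have [g' fg' gf'] := inj_card_bij phii' (eq_leq (esym card)).
apply/idP/idP.
  case/andP => _ /existsP [f /andP [/injectiveP fi /forallP Ef0]].
  have Ef x y : E' (f x, f y) = E (x, y) by apply/eqP; exact: (forallP (Ef0 x) y).
  pose F (u : 'I_m * bool) := (f u.1, u.2).
  have qi : injective (fun x => phi' (F (g x))).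
    move=> x y /phii' [/fi e1 e2]; apply: (can_inj gf).
    by move: e1 e2; case: (g x); case: (g y) => ? ? ? ? /= -> ->.
  pose a := perm qi.
  have aphi u : a (phi u) = phi' (F u) by rewrite permE fg.
  have aK : a \in autK eK.
    rewrite inE; apply/forallP => x; apply/forallP => y.
    by rewrite -(gf x) -(gf y) !aphi He' He /kron_cover /grel /= Ef.
  have key u : a (p (phi u)) = p' (a (phi u)).
    by rewrite Hp !aphi Hp'.
  apply/existsP; exists (a^-1)%g; rewrite autKV //= invgK.
  apply/eqP/permP => x; rewrite !permM.
  by rewrite -{1}(permKV a x) -(gf (a^-1 x)%g) key.
case/existsP => a /andP [aK /eqP pa].
pose b := (a^-1)%g.
have bK : b \in autK eK by exact: autKV.
have bp x : b (p x) = p' (b x) by rewrite pa !permM permKV.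
have be x y : eK (b x) (b y) = eK x y.
  by move: bK; rewrite inE => /forallP /(_ x) /forallP /(_ y) /eqP.
pose F u := g' (b (phi u)).
have Fp u : phi' (F u) = b (phi u) by rewrite gf'.
have KCF u v : kron_cover (grel E') (F u) (F v) = kron_cover (grel E) u v.
  by rewrite -He' !Fp be He.
have Fsw u : F (sw u) = sw (F u).
  by apply: phii'; rewrite Fp -Hp bp -Fp Hp'.
have Fi : injective F by move=> u v /(congr1 phi') ; rewrite !Fp => /perm_inj /phii.
apply/andP; split => //; apply/existsP; exists [ffun i => (F (i, false)).1].
apply/andP; split.
  apply/injectiveP => i j; rewrite !ffunE => e.
  case: (eqVneq (F (i, false)).2 (F (j, false)).2) => e2.
    have : F (i, false) = F (j, false).
      by move: e e2; case: (F (i, false)); case: (F (j, false)) => ? ? ? ? /= -> ->.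
    by move/Fi => [].
  have : F (j, false) = F (i, true).
    change (i, true) with (sw (i, false)); rewrite Fsw.
    move: e e2; rewrite /sw; case: (F (i, false)); case: (F (j, false)) => x1 b1 x2 b2 /= ->.
    by case: b1; case: b2.
  by move/Fi.
apply/forallP => i; apply/forallP => j; rewrite !ffunE /grel.
have h1 := KCF (i, false) (j, true).
have h2 := KCF (i, false) (j, false).
change (j, true) with (sw (j, false)) in h1; rewrite Fsw in h1.
move: h1 h2; rewrite /kron_cover /grel /sw /=.
case: (F (i, false)) => fi bi; case: (F (j, false)) => fj bj /=.
by case: bi; case: bj => /=; rewrite ?andbT ?andbF => -> // <-.
Qed.

Theorem proposition3 (T : finType) (eK : rel T) (V1 : {set T}) :
  simple_graph eK ->
  connected_graph eK ->
  is_bipartition eK V1 ->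
  n_kc_classes eK = n_polarity_classes eK V1 /\
  (forall k : nat, n_kc_classes eK = k <-> k = n_polarity_classes eK V1).
Proof.
move=> simp conn bip.
suff H : n_kc_classes eK = n_polarity_classes eK V1.
  by split => // k; split => [<-|->].
have zero m : m + m != #|T| -> n_kc_classes_m eK m = 0.
  move=> hm; rewrite /n_kc_classes_m.
  have -> : kc_preimages eK m = set0.
    apply/setP => E; rewrite inE [in RHS]inE; apply/negbTE; apply/negP.
    case/andP => _ /andP [/eqP c _]; move: c hm.
    rewrite card_prod card_ord card_bool => <- /eqP; lia.
  by rewrite imset0 cards0.
have hn := odd_double_half #|T|.
case: (boolP (odd #|T|)) => hodd.
  rewrite /n_kc_classes big1 => [|m _]; last first.
    apply: zero; apply/negP => /eqP e; move: hodd; rewrite -e addnn odd_double.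
    by [].
  rewrite /n_polarity_classes.
  have -> : polarities eK V1 = set0.
    apply/setP => p; rewrite [in RHS]inE; apply/negbTE/negP => /pol_card.
    by move=> e; move: hodd; rewrite -e addnn odd_double.
  by rewrite imset0 cards0.
set m0 := #|T|./2.
have hm : #|T| = m0 + m0 by rewrite addnn -{1}hn (negbTE hodd).
have lt : m0 < #|T|.+1 by lia.
rewrite /n_kc_classes (bigD1 (Ordinal lt)) //= big1 ?addn0; last first.
  move=> i /eqP ne; apply: zero; apply/negP => /eqP e; apply: ne.
  apply: val_inj => /=; lia.
rewrite /n_kc_classes_m /n_polarity_classes.
apply: (@class_count _ _ _ _ set0 _ _ _ _ (@Rrel T eK m0)).
- by move=> E EP; exact: tot conn bip EP.
- by move=> p pP; exact: sur simp bip hm pP.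
- move=> E E' p p' EP E'P pP p'P R1 R2.
  rewrite pclass_eq -(compat EP E'P R1 R2).
  apply: (eqclass (r := fun E E' => graph_iso (grel E) (grel E'))).
  + by move=> x; exact: giso_refl.
  + by move=> x y; exact: giso_sym.
  + by move=> x y z; exact: giso_trans.
Qed.
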